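(* Let $M(k,l,m,n)=\langle x,y \mid y^m=x^l,\ x^n=1,\ y^{-1}xy=x^k\rangle$ be a metacyclic group, where $\gcd(n,k)=1$, $k^m\equiv 1 \pmod n$ and $l(k-1)\equiv 0\pmod n$. Let $I$ be a set of integers containing exactly one representative of each orbit of the action of the cyclic group $K=\langle y\rangle$ on $\mathbb{Z}/n$ given by $y\cdot u = ku$. For $a\in I$ let $Ka=\{ak^i \bmod n : i\ge 0\}$ be its orbit and $r_a=|Ka|$. For $a,b,c\in I$ put $$S(a,b,c)=\big|\{(r,s)\in Ka\times Kb : r+s\equiv c \pmod n\}\big|,$$ and for $a\in I$ and an integer $\alpha$ put $$e_{a,\alpha}=\frac{n}{\gcd(n,l)}\Big(\alpha+\Big\{\frac{al}{n}\Big\}\Big),$$ where $\{t\}$ denotes the fractional part of $t$ (this is an integer). Let $a,b,c\in I$ with $S(a,b,c)\neq 0$, and let $0\le \alpha<r_c$, $0\le\beta<r_b$, $0\le \gamma<r_c$. Then $$e_{a,\alpha}+e_{b,\beta}-e_{c,\gamma}\equiv 0 \pmod{\frac{n}{\gcd(n,l)}}.$$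
   Context: Here $\gcd(n,0)=n$. The integer $e_{a,\alpha}$ equals $\frac{n\alpha+al-n\lfloor al/n\rfloor}{\gcd(n,l)}$. *)

(* Defs.v *)
From HB Require Import structures.
From mathcomp Require Import all_boot all_order all_algebra.
From mathcomp Require Import boolp.
Set Implicit Arguments. Unset Strict Implicit. Unset Printing Implicit Defensive.
Import Order.TTheory GRing.Theory Num.Theory.
Local Open Scope ring_scope.

(* Residues mod n are represented by integers in [0, n). *)

Definition inOrbit (n : nat) (k a x : int) : Prop :=
  exists i : nat, x = ((a * k ^+ i) %% n%:Z)%Z.

Definition orbit_size (n : nat) (k a : int) : nat :=
  #|[set x : 'I_n | `[< inOrbit n k a (x : nat)%:Z >]]|.

Definition Scount (n : nat) (k a b c : int) : nat :=
  #|[set p : 'I_n * 'I_n |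
      `[< inOrbit n k a (p.1 : nat)%:Z /\ inOrbit n k b (p.2 : nat)%:Z /\
          (((p.1 : nat)%:Z + (p.2 : nat)%:Z) = c %[mod n%:Z])%Z >]]|.

Definition e_coef (n : nat) (l a alpha : int) : int :=
  ((n%:Z * alpha + a * l - n%:Z * ((a * l) %/ n%:Z)%Z) %/ gcdz n%:Z l)%Z.

Definition orbit_reps (n : nat) (k : int) (I : int -> Prop) : Prop :=
  forall u : int, exists! a : int, I a /\ inOrbit n k a (u %% n%:Z)%Z.

(* Main.v *)
Require Import Defs.
From HB Require Import structures.
From mathcomp Require Import all_boot all_order all_algebra.
From mathcomp Require Import boolp.
From mathcomp Require Import ring.
Import Order.TTheory GRing.Theory Num.Theory.
Local Open Scope ring_scope.

Lemma lk_pow (n : int) (k l : int) : (n %| l * (k - 1))%Z ->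
  forall i : nat, (n %| l * k ^+ i - l)%Z.
Proof.
move=> h; elim=> [|i IH]; first by rewrite expr0 mulr1 subrr rpred0.
have -> : l * k ^+ i.+1 - l = (l * k ^+ i - l) * k + l * (k - 1).
  by rewrite exprS; ring.
by apply: rpredD => //; apply: dvdz_mulr.
Qed.

Lemma orb_l (n : nat) (k l a x : int) : (n%:Z %| l * (k - 1))%Z ->
  inOrbit n k a x -> (n%:Z %| x * l - a * l)%Z.
Proof.
move=> h [i ->].
have -> : ((a * k ^+ i) %% n%:Z)%Z * l - a * l =
  (((a * k ^+ i) %% n%:Z)%Z - a * k ^+ i) * l + a * (l * k ^+ i - l) by ring.
apply: rpredD; last by apply: dvdz_mull; apply: lk_pow.
apply: dvdz_mulr.
have e := divz_eq (a * k ^+ i) n%:Z.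
have -> : ((a * k ^+ i) %% n%:Z)%Z - a * k ^+ i = - ((a * k ^+ i) %/ n%:Z)%Z * n%:Z.
  by rewrite {2}e; ring.
by apply: dvdz_mull; apply: dvdzz.
Qed.

Theorem mainTheorem1 (k l : int) (m n : nat) (I : int -> Prop)
  (hn : (0 < n)%N)
  (hkn : gcdz n%:Z k = 1)
  (hkm : (k ^+ m = 1 %[mod n%:Z])%Z)
  (hlk : (n%:Z %| l * (k - 1))%Z)
  (hI : orbit_reps n k I)
  (a b c : int) (ha : I a) (hb : I b) (hc : I c)
  (hS : Scount n k a b c <> 0%N)
  (alpha beta gamma : int)
  (halpha : 0 <= alpha < (orbit_size n k c)%:Z)
  (hbeta : 0 <= beta < (orbit_size n k b)%:Z)
  (hgamma : 0 <= gamma < (orbit_size n k c)%:Z) :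
  ((n%:Z %/ gcdz n%:Z l)%Z %| e_coef n l a alpha + e_coef n l b beta - e_coef n l c gamma)%Z.
Proof.
have key : (n%:Z %| (a + b - c) * l)%Z.
  move: hS; rewrite /Scount => /eqP; rewrite -lt0n => /card_gt0P [p].
  rewrite inE => /asboolP [hr [hs hc']].
  have h1 := @orb_l n k l a _ hlk hr; have h2 := @orb_l n k l b _ hlk hs.
  have h3 : (n%:Z %| ((p.1 : nat)%:Z + (p.2 : nat)%:Z - c) * l)%Z.
    by apply: dvdz_mulr; rewrite -eqz_mod_dvd; apply/eqP.
  have -> : (a + b - c) * l = ((p.1 : nat)%:Z + (p.2 : nat)%:Z - c) * l
     - ((p.1 : nat)%:Z * l - a * l) - ((p.2 : nat)%:Z * l - b * l) by ring.
  by apply: rpredB; [apply: rpredB|]...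
set g := gcdz n%:Z l.
have g0 : g != 0 by rewrite gcdz_eq0 negb_and -lt0n hn.
have gn : (g %| n%:Z)%Z by apply: dvdz_gcdl.
have gl : (g %| l)%Z by apply: dvdz_gcdr.
set N := (n%:Z %/ g)%Z.
set l' := (l %/ g)%Z.
have eN : n%:Z = N * g by rewrite /N divzK.
have el : l = l' * g by rewrite /l' divzK.
have ee : forall x al, e_coef n l x al = N * (al - ((x * l) %/ n%:Z)%Z) + x * l'.
  move=> x al; rewrite /e_coef -/g.
  set q := ((x * l) %/ n%:Z)%Z.
  have -> : n%:Z * al + x * l - n%:Z * q = (N * (al - q) + x * l') * g.
    by rewrite eN el; ring.
  by rewrite mulzK.
rewrite !ee.
have -> : N * (alpha - ((a * l) %/ n%:Z)%Z) + a * l' +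
   (N * (beta - ((b * l) %/ n%:Z)%Z) + b * l') -
   (N * (gamma - ((c * l) %/ n%:Z)%Z) + c * l')
  = N * ((alpha - ((a * l) %/ n%:Z)%Z) + (beta - ((b * l) %/ n%:Z)%Z)
         - (gamma - ((c * l) %/ n%:Z)%Z)) + (a + b - c) * l' by ring.
apply: rpredD; first by apply: dvdz_mulr; apply: dvdzz.
by rewrite -(dvdz_mul2r g0) -mulrA -el -eN.
Qed.
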